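(* Let $A \in \mathbb{R}^{m \times n}$ be the payoff matrix of a finite two-player zero-sum game with value $v^*$, and let $\{(x_t,y_t)\}_{t\in\mathbb{N}}$ together with $\{(\overline{x}_t,\overline{y}_t)\}_{t \in \mathbb{N}}$ be an anticipatory fictitious play (AFP) process for $A$ (defined in the context), with arbitrary choices among best responses when there are ties. Then $$\lim_{t\to\infty} \min \overline{x}_t^{\mathsf T} A = \lim_{t\to\infty} \max A\overline{y}_t = v^*,$$ i.e. the average strategies converge to a Nash equilibrium, and moreover $$\max A\overline{y}_t - \min \overline{x}_t^{\mathsf T} A = O\big(t^{-1/(m+n-2)}\big) \quad \text{for all } t \in \mathbb{N},$$ the same rate bound that holds for fictitious play.
   Context: A two-player zero-sum game is given by $A\in\mathbb{R}^{m\times n}$: if player 1 plays row $i$ and player 2 plays column $j$, payoffs are $(A_{i,j},-A_{i,j})$. $\Delta^k$ denotes the probability simplex in $\mathbb{R}^k$; strategies are $x\in\Delta^m$, $y\in\Delta^n$. For a vector $w$, $\max w$ and $\min w$ denote its largest and smallest entries. The value is $v^* = \max_{x\in\Delta^m}\min_{y\in\Delta^n} x^{\mathsf T}Ay$. $e_1,e_2,\dots$ denote standard basis vectors. Best response operators: $\texttt{BR}^1_A(y)=\{e_i\in\mathbb{R}^m : i\in\arg\max Ay\}$ and $\texttt{BR}^2_A(x)=\{e_j\in\mathbb{R}^n: j \in \arg\min x^{\mathsf T}A\}$. The AFP process: for some $i,j$, $x_1=\overline{x}_1=e_i$, $y_1=\overline{y}_1=e_j$, and for each $t\in\mathbb{N}$: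 $x'_{t+1}\in\texttt{BR}^1_A(\overline{y}_t)$, $y'_{t+1}\in\texttt{BR}^2_A(\overline{x}_t)$; $\overline{x}'_{t+1}=\tfrac{t}{t+1}\overline{x}_t+\tfrac{1}{t+1}x'_{t+1}$, $\overline{y}'_{t+1}=\tfrac{t}{t+1}\overline{y}_t+\tfrac{1}{t+1}y'_{t+1}$; $x_{t+1}\in\texttt{BR}^1_A(\overline{y}'_{t+1})$, $y_{t+1}\in\texttt{BR}^2_A(\overline{x}'_{t+1})$; $\overline{x}_{t+1}=\tfrac{1}{t+1}\sum_{k=1}^{t+1}x_k$, $\overline{y}_{t+1}=\tfrac{1}{t+1}\sum_{k=1}^{t+1}y_k$. *)

(* Defs.v *)
From HB Require Import structures.
From mathcomp Require Import all_boot all_order all_algebra.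
From mathcomp Require Import all_classical all_reals all_analysis.
Set Implicit Arguments. Unset Strict Implicit. Unset Printing Implicit Defensive.
Import Order.TTheory GRing.Theory Num.Theory.
Local Open Scope ring_scope.

Section AFP.
Context {R : realType}.

(* largest / smallest entry of a vector w in R^m (0 if m = 0, never used) *)
Definition vmax m (w : 'I_m -> R) : R :=
  if [pick k : 'I_m] is Some k then \big[Num.max/w k]_(j < m) w j else 0.
Definition vmin m (w : 'I_m -> R) : R :=
  if [pick k : 'I_m] is Some k then \big[Num.min/w k]_(j < m) w j else 0.

Definition simplex m (x : 'I_m -> R) : Prop :=
  (forall i, 0 <= x i) /\ \sum_(i < m) x i = 1.

Definition xA m n (A : 'M[R]_(m, n)) (x : 'I_m -> R) : 'I_n -> R :=
  fun j => \sum_(i < m) x i * A i j.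
Definition Ay m n (A : 'M[R]_(m, n)) (y : 'I_n -> R) : 'I_m -> R :=
  fun i => \sum_(j < n) A i j * y j.

(* value v* = max_{x in Delta^m} min x^T A  (the max is attained, so it is the sup) *)
Definition game_value m n (A : 'M[R]_(m, n)) : R :=
  sup [set v | exists x, simplex x /\ v = vmin (xA A x)].

Definition ev m (i : 'I_m) : 'I_m -> R := fun r => (r == i)%:R.

(* best responses: e_i in BR^1_A(y) iff i in argmax Ay ; e_j in BR^2_A(x) iff j in argmin x^T A *)
Definition BR1 m n (A : 'M[R]_(m, n)) (y : 'I_n -> R) (i : 'I_m) : bool :=
  Ay A y i == vmax (Ay A y).
Definition BR2 m n (A : 'M[R]_(m, n)) (x : 'I_m -> R) (j : 'I_n) : bool :=
  xA A x j == vmin (xA A x).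

Definition avg m (s : nat -> 'I_m) (t : nat) : 'I_m -> R :=
  fun r => (\sum_(1 <= k < t.+1) ev (s k) r) / t%:R.

Definition anti_avg m (s s' : nat -> 'I_m) (t : nat) : 'I_m -> R :=
  fun r => (t%:R / t.+1%:R) * avg s t r + (1 / t.+1%:R) * ev (s' t.+1) r.

(* AFP process: x_t = e_{xi t}, y_t = e_{yj t} (t >= 1; x_1, y_1 arbitrary),
   x'_t = e_{xi' t}, y'_t = e_{yj' t} (t >= 2). *)
Definition AFP m n (A : 'M[R]_(m, n))
    (xi xi' : nat -> 'I_m) (yj yj' : nat -> 'I_n) : Prop :=
  forall t : nat, (1 <= t)%N ->
    [/\ BR1 A (avg yj t) (xi' t.+1),
        BR2 A (avg xi t) (yj' t.+1),
        BR1 A (anti_avg yj yj' t) (xi t.+1)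
      & BR2 A (anti_avg xi xi' t) (yj t.+1)].

End AFP.

(* Main.v *)
Require Import Defs.
From HB Require Import structures.
From mathcomp Require Import all_boot all_order all_algebra.
From mathcomp Require Import all_classical all_reals all_analysis.
From mathcomp Require Import ring lra zify.
From Stdlib Require Import Classical.
Set Implicit Arguments. Unset Strict Implicit. Unset Printing Implicit Defensive.
Import Order.TTheory GRing.Theory Num.Theory.
Import numFieldNormedType.Exports.
Local Open Scope classical_set_scope.
Local Open Scope ring_scope.

Section CoreS.
Variable R : realFieldType.

Definition sys m n (A : 'M[R]_(m,n)) (dl : R) (I : {set 'I_m}) (J : {set 'I_n})
  (U : nat -> 'I_n -> R) (V : nat -> 'I_m -> R) (ii : nat -> 'I_m) (jj : nat -> 'I_n)
  (s T : nat) : Prop :=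
  forall tau, (s <= tau)%N -> (tau < s + T)%N ->
  [/\ ii tau \in I, jj tau \in J,
      (forall j, U tau.+1 j = U tau j + A (ii tau) j),
      (forall i, V tau.+1 i = V tau i + A i (jj tau))
    & ((forall k, k \in I -> V tau k <= V tau (ii tau) + dl)
    /\ (forall l, l \in J -> U tau (jj tau) <= U tau l + dl))].

Lemma lipV m n (A : 'M[R]_(m,n)) a dl I J U V ii jj s T :
  (forall i j, `|A i j| <= a) -> sys A dl I J U V ii jj s T ->
  forall tau k i, (s <= tau)%N -> (tau + k <= s + T)%N ->
  V tau i - k%:R * a <= V (tau + k)%N i <= V tau i + k%:R * a.
Proof.
move=> hA hs tau k i h1; elim: k => [|k IH] h2.
  by rewrite addn0 mul0r subr0 addr0 lexx.
have [_ _ _ hV _] := hs (tau + k)%N ltac:(lia) ltac:(lia).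
rewrite addnS hV; have := IH ltac:(lia); have := hA i (jj (tau + k)%N).
rewrite ler_norml => /andP[h3 h4] /andP[h5 h6].
rewrite -natr1 mulrDl mul1r; apply/andP; split; lra.
Qed.

Lemma lipU m n (A : 'M[R]_(m,n)) a dl I J U V ii jj s T :
  (forall i j, `|A i j| <= a) -> sys A dl I J U V ii jj s T ->
  forall tau k j, (s <= tau)%N -> (tau + k <= s + T)%N ->
  U tau j - k%:R * a <= U (tau + k)%N j <= U tau j + k%:R * a.
Proof.
move=> hA hs tau k j h1; elim: k => [|k IH] h2.
  by rewrite addn0 mul0r subr0 addr0 lexx.
have [_ _ hU _ _] := hs (tau + k)%N ltac:(lia) ltac:(lia).
rewrite addnS hU; have := IH ltac:(lia); have := hA (ii (tau + k)%N) j.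
rewrite ler_norml => /andP[h3 h4] /andP[h5 h6].
rewrite -natr1 mulrDl mul1r; apply/andP; split; lra.
Qed.


Lemma cross m n (A : 'M[R]_(m,n)) (dl : R) I J U V ii jj s T (G : R) u :
  sys A dl I J U V ii jj s T -> (1 <= u)%N -> (u <= T)%N ->
  (forall i j, i \in I -> j \in J -> V s i - U s j <= G) ->
  exists2 tau, (s <= tau < s + u)%N &
     V (s + u)%N (ii tau) - U (s + u)%N (jj tau) <= G.
Proof.
move=> hs hu huT hG.
pose S w := \sum_(s <= tau < s + u) (V w (ii tau) - U w (jj tau)).
pose D w := \sum_(s <= tau < s + u) A (ii tau) (jj w)
          - \sum_(s <= tau < s + u) A (ii w) (jj tau).
have hk : forall k, (k <= u)%N -> S (s + k)%N = S s + \sum_(s <= w < s + k) D w.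
  elim=> [|k IH] hk; first by rewrite addn0 big_geq ?addr0.
  rewrite addnS big_nat_recr /=; last by lia.
  rewrite addrA -IH; last by lia.
  have [_ _ hU hV _] := hs (s + k)%N ltac:(lia) ltac:(lia).
  rewrite /S /D -sumrB -big_split /=.
  apply: eq_bigr => tau _; rewrite hU hV; lra.
have hD : \sum_(s <= w < s + u) D w = 0.
  rewrite /D sumrB; apply/eqP; rewrite subr_eq0; apply/eqP.
  by rewrite exchange_big_nat.
have hS0 : S s <= G *+ u.
  have -> : G *+ u = \sum_(s <= tau < s + u) G.
    by rewrite sumr_const_nat; congr (_ *+ _); lia.
  apply: ler_sum_nat => tau htau.
  have [h1 h2 _ _ _] := hs tau ltac:(lia) ltac:(lia).
  exact: hG.
have hSu : S (s + u)%N <= G *+ u by rewrite hk // hD addr0.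
case: (classic (exists2 tau, (s <= tau < s + u)%N &
     V (s + u)%N (ii tau) - U (s + u)%N (jj tau) <= G)) => // hno.
exfalso; move: hSu; apply/negP; rewrite -ltNge.
have -> : G *+ u = \sum_(s <= tau < s + u) G.
  by rewrite sumr_const_nat; congr (_ *+ _); lia.
apply: ltr_sum_nat; first by lia.
move=> tau htau; rewrite ltNge; apply/negP => h; apply: hno; by exists tau.
Qed.


Lemma alleli m n (A : 'M[R]_(m,n)) (a dl : R) I J U V ii jj s T (G : R) u s' L :
  (forall i j, `|A i j| <= a) -> 0 <= a ->
  sys A dl I J U V ii jj s T -> (1 <= u)%N -> (u <= T)%N ->
  (s <= s')%N -> (s' <= s + u)%N -> (s + u - s' <= L)%N ->
  (forall i j, i \in I -> j \in J -> V s i - U s j <= G) ->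
  (forall k, k \in I -> exists2 tau, (s' <= tau <= s + u)%N &
        forall k', k' \in I -> V tau k' <= V tau k + dl) ->
  (forall l, l \in J -> exists2 tau, (s' <= tau <= s + u)%N &
        forall l', l' \in J -> U tau l <= U tau l' + dl) ->
  forall i j, i \in I -> j \in J ->
    V (s + u)%N i - U (s + u)%N j <= G + 4%:R * a * L%:R + 2%:R * dl.
Proof.
move=> hA ha hs hu huT h1 h2 h3 hG hI hJ i j iI jJ.
have [tau0 htau0 hc] := cross hs hu huT hG.
have [i0I j0J _ _ _] := hs tau0 ltac:(lia) ltac:(lia).
have [t1 ht1 e1] := hI _ i0I.
have [t2 ht2 e2] := hJ _ j0J.
have LL : forall tau, (s' <= tau <= s + u)%N -> ((s + u - tau)%:R * a <= L%:R * a).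
  move=> tau ht; apply: ler_wpM2r => //; rewrite ler_nat; lia.
have eq1 : (t1 + (s + u - t1))%N = (s + u)%N by lia.
have eq2 : (t2 + (s + u - t2))%N = (s + u)%N by lia.
have := lipV hA hs (tau:=t1) (k:=(s + u - t1)%N) i ltac:(lia) ltac:(lia); rewrite eq1.
have := lipV hA hs (tau:=t1) (k:=(s + u - t1)%N) (ii tau0) ltac:(lia) ltac:(lia); rewrite eq1.
have := lipU hA hs (tau:=t2) (k:=(s + u - t2)%N) j ltac:(lia) ltac:(lia); rewrite eq2.
have := lipU hA hs (tau:=t2) (k:=(s + u - t2)%N) (jj tau0) ltac:(lia) ltac:(lia); rewrite eq2.
have := e1 _ iI; have := e2 _ jJ; have := LL _ ht1; have := LL _ ht2.
move=> q1 q2 q3 q4 /andP[q5 q6] /andP[q7 q8] /andP[q9 q10] /andP[q11 q12].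
lra.
Qed.


Lemma sysT m n (A : 'M[R]_(m,n)) (dl : R) I J U V ii jj s T :
  sys A dl I J U V ii jj s T ->
  sys (- A^T) dl J I (fun t k => - V t k) (fun t k => - U t k) jj ii s T.
Proof.
move=> hs tau h1 h2; have [q1 q2 q3 q4 [q5 q6]] := hs tau h1 h2.
split => //.
- by move=> k; rewrite q4 !mxE opprD.
- by move=> k; rewrite q3 !mxE opprD.
split => k hk.
- by have := q6 _ hk; lra.
- by have := q5 _ hk; lra.
Qed.

Definition Pd (a dl : R) (d : nat) : Prop :=
 forall m n (A : 'M[R]_(m,n)) (I : {set 'I_m}) (J : {set 'I_n})
   (U : nat -> 'I_n -> R) (V : nat -> 'I_m -> R) (ii : nat -> 'I_m) (jj : nat -> 'I_n)
   (s T : nat) (G : R) (N t : nat) (i : 'I_m) (j : 'I_n),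
  (forall i j, `|A i j| <= a) -> (#|I| + #|J|)%N = d.+2 ->
  sys A dl I J U V ii jj s T ->
  (forall i j, i \in I -> j \in J -> V s i - U s j <= G) ->
  (1 <= N)%N -> (t <= T)%N -> (t <= N ^ d)%N -> i \in I -> j \in J ->
  N%:R * (V (s + t)%N i - U (s + t)%N j - G) <=
    d%:R * (6%:R * a + 2%:R * dl) * N%:R ^+ d.

Lemma red (a dl : R) d m n (A : 'M[R]_(m,n)) (I : {set 'I_m}) (J : {set 'I_n})
   (U : nat -> 'I_n -> R) (V : nat -> 'I_m -> R) (ii : nat -> 'I_m) (jj : nat -> 'I_n)
   (s L : nat) (G : R) (N : nat) (r : 'I_m) :
  Pd a dl d -> 0 <= dl ->
  (forall i j, `|A i j| <= a) -> (#|I| + #|J|)%N = d.+3 ->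
  sys A dl I J U V ii jj s L ->
  (forall i j, i \in I -> j \in J -> V s i - U s j <= G) ->
  (1 <= N)%N -> (L <= N ^ d)%N -> r \in I ->
  (forall tau, (s <= tau <= s + L)%N -> exists2 k, k \in I & V tau r + dl < V tau k) ->
  forall i j, i \in I -> j \in J ->
  N%:R * (V (s + L)%N i - U (s + L)%N j - G) <=
    d%:R * (6%:R * a + 2%:R * dl) * N%:R ^+ d.
Proof.
move=> hP hdl hA hc hs hG hN hL rI hne.
have hc' : (#|I :\ r| + #|J|)%N = d.+2.
  by move: hc; rewrite (cardsD1 r I) rI /= add1n addSn => -[].
have hs' : sys A dl (I :\ r) J U V ii jj s L.
  move=> tau h1 h2; have [q1 q2 q3 q4 [q5 q6]] := hs tau h1 h2.
  split => //; last first.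
    by split => // k; rewrite in_setD1 => /andP[_ kI]; apply: q5.
  rewrite in_setD1 q1 andbT; apply/eqP => e.
  have [k kI hk] := hne tau ltac:(lia).
  have := q5 _ kI; rewrite e; lra.
have hG' : forall i j, i \in I :\ r -> j \in J -> V s i - U s j <= G.
  by move=> i j; rewrite in_setD1 => /andP[_ iI]; apply: hG.
have key : forall i j, i \in I :\ r -> j \in J ->
  N%:R * (V (s + L)%N i - U (s + L)%N j - G) <=
    d%:R * (6%:R * a + 2%:R * dl) * N%:R ^+ d.
  by move=> i j iI jJ; apply: (hP _ _ A (I :\ r) J U V ii jj s L G N L) => //.
move=> i j iI jJ.
case: (eqVneq i r) => [->|ir]; last by apply: key => //; rewrite in_setD1 ir.
have [k kI hk] := hne (s + L)%N ltac:(lia).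
have kr : k != r by apply/eqP => e; move: hk; rewrite e; lra.
apply: le_trans (key k j _ jJ); last by rewrite in_setD1 kr.
apply: ler_wpM2l; first by rewrite ler0n.
lra.
Qed.


Lemma base (a dl : R) : Pd a dl 0.
Proof.
move=> m n A I J U V ii jj s T G N t i j hA hc hs hG hN htT htN iI jJ.
have c1 : #|I| = 1%N.
  have : (0 < #|I|)%N by apply/card_gt0P; exists i.
  have : (0 < #|J|)%N by apply/card_gt0P; exists j.
  lia.
have c2 : #|J| = 1%N by lia.
have [x ex] := cards1P (introT eqP c1); have [y ey] := cards1P (introT eqP c2).
have hi : forall tau, (s <= tau)%N -> (tau < s + T)%N -> ii tau = i /\ jj tau = j.
  move=> tau h1 h2; have [q1 q2 _ _ _] := hs tau h1 h2.
  move: q1 q2 iI jJ; rewrite ex ey !inE => /eqP -> /eqP -> /eqP -> /eqP ->.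
  by [].
have e : forall u, (u <= T)%N -> V (s + u)%N i - U (s + u)%N j = V s i - U s j.
  elim=> [|u IH] hu; first by rewrite addn0.
  have [_ _ q3 q4 _] := hs (s + u)%N ltac:(lia) ltac:(lia).
  have [e1 e2] := hi (s + u)%N ltac:(lia) ltac:(lia).
  rewrite addnS q3 q4 e1 e2 -IH; last by lia.
  lra.
rewrite e // mul0r mul0r.
apply: mulr_ge0_le0; first by rewrite ler0n.
by have := hG _ _ iI jJ; lra.
Qed.

Lemma step (a dl : R) d : 0 <= dl -> Pd a dl d -> Pd a dl d.+1.
Proof.
move=> hdl hP m n A I J U V ii jj s T G N t i0 j0 hA hc hs hG hN htT htN i0I j0J.
have ha : 0 <= a by apply: le_trans (hA i0 j0).
set L := (N ^ d)%N.
have hL : (1 <= L)%N by rewrite /L expn_gt0; lia.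
set K' := d%:R * (6%:R * a + 2%:R * dl).
have hK' : 0 <= K' by rewrite /K'; apply: mulr_ge0; [rewrite ler0n| lra].
have hN0 : 0 < N%:R :> R by rewrite ltr0n.
have inner : forall u, (u <= t)%N -> forall i j, i \in I -> j \in J ->
    N%:R * (V (s + u)%N i - U (s + u)%N j - G) <=
    N%:R * (6%:R * a * L%:R + 2%:R * dl) + u%:R * K'.
  elim/ltn_ind => u IHu hu i j iI jJ.
  case: (ltnP u L) => huL.
    have := lipV hA hs (tau:=s) (k:=u) i (leqnn s) ltac:(lia).
    have := lipU hA hs (tau:=s) (k:=u) j (leqnn s) ltac:(lia).
    have := hG _ _ iI jJ.
    have : u%:R * a <= L%:R * a by apply: ler_wpM2r => //; rewrite ler_nat; lia.
    have : 0 <= u%:R * K' by apply: mulr_ge0; rewrite ?ler0n.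
    move=> q1 q2 q3 /andP[q4 q5] /andP[q6 q7].
    have : V (s + u)%N i - U (s + u)%N j - G <= 6%:R * a * L%:R + 2%:R * dl.
      have : 0 <= L%:R * a by apply: mulr_ge0; rewrite ?ler0n.
      lra.
    move=> q8.
    have : N%:R * (V (s + u)%N i - U (s + u)%N j - G) <=
        N%:R * (6%:R * a * L%:R + 2%:R * dl) by apply: ler_wpM2l => //; apply: ltW.
    lra.
  set s' := (s + (u - L))%N.
  have eqL : (s' + L)%N = (s + u)%N by rewrite /s'; lia.
  have hsub : sys A dl I J U V ii jj s' L.
    move=> tau h1 h2; apply: hs; rewrite /s' in h1 h2 *; lia.
  set G' := G + (6%:R * a * L%:R + 2%:R * dl) + (u - L)%:R * K' / N%:R.
  have hG' : forall i j, i \in I -> j \in J -> V s' i - U s' j <= G'.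
    move=> i' j' i'I j'J.
    have := IHu (u - L)%N ltac:(lia) ltac:(lia) i' j' i'I j'J.
    rewrite /G' -/s' => h.
    rewrite -subr_ge0.
    have -> : G + (6%:R * a * L%:R + 2%:R * dl) + (u - L)%:R * K' / N%:R
       - (V s' i' - U s' j') =
       (N%:R * (6%:R * a * L%:R + 2%:R * dl) + (u - L)%:R * K'
        - N%:R * (V s' i' - U s' j' - G)) / N%:R.
      by field; rewrite lt0r_neq0.
    apply: divr_ge0; last exact: ltW.
    by rewrite subr_ge0.
  have fin : forall z, N%:R * (z - G') <= K' * N%:R ^+ d ->
      N%:R * (z - G) <= N%:R * (6%:R * a * L%:R + 2%:R * dl) + u%:R * K'.
    move=> z hz.
    have eu : u%:R = (u - L)%:R + L%:R :> R by rewrite -natrD; congr (_%:R); lia.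
    have eL : L%:R = N%:R ^+ d :> R by rewrite /L natrX.
    have -> : N%:R * (z - G) = N%:R * (z - G') +
       (N%:R * (6%:R * a * L%:R + 2%:R * dl) + (u - L)%:R * K').
      by rewrite /G'; field; rewrite lt0r_neq0.
    rewrite eu -eL in hz *; lra.
  have hcard : (0 < #|I|)%N /\ (0 < #|J|)%N.
    by split; apply/card_gt0P; [exists i | exists j].
  case: (classic (exists2 r, r \in I & forall tau, (s' <= tau <= s' + L)%N ->
            exists2 k, k \in I & V tau r + dl < V tau k)) => [[r rI hr]|hnr].
    rewrite -eqL; apply: fin.
    exact: (red hP hdl hA hc hsub hG' hN (leqnn _) rI hr).
  case: (classic (exists2 c, c \in J & forall tau, (s' <= tau <= s' + L)%N ->
            exists2 l, l \in J & U tau l + dl < U tau c)) => [[c cJ hc']|hnc].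
    rewrite -eqL; apply: fin.
    have hAT : forall i j, `|(- A^T) i j| <= a by move=> i' j'; rewrite !mxE normrN.
    have hcT : (#|J| + #|I|)%N = d.+3 by rewrite addnC.
    have hGT : forall i j, i \in J -> j \in I -> - U s' i - - V s' j <= G'.
      by move=> i' j' i'J j'I; have := hG' _ _ j'I i'J; lra.
    have := red hP hdl hAT hcT (sysT hsub) hGT hN (leqnn _) cJ.
    move=> /(_ _) h.
    have := h ltac:(move=> tau htau; have [l lJ hl] := hc' tau htau; exists l => //; lra) j i jJ iI.
    move=> /= h2; apply: le_trans h2; apply: ler_wpM2l; first by apply: ltW.
    lra.
  have hI : forall k, k \in I -> exists2 tau, (s' <= tau <= s + u)%N &
        forall k', k' \in I -> V tau k' <= V tau k + dl.
    move=> k kI; apply: NNPP => hno; apply: hnr; exists k => // tau htau.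
    apply: NNPP => hno2; apply: hno; exists tau; first by rewrite -eqL.
    move=> k' k'I; rewrite leNgt; apply/negP => hlt; apply: hno2; by exists k'.
  have hJ : forall l, l \in J -> exists2 tau, (s' <= tau <= s + u)%N &
        forall l', l' \in J -> U tau l <= U tau l' + dl.
    move=> l lJ; apply: NNPP => hno; apply: hnc; exists l => // tau htau.
    apply: NNPP => hno2; apply: hno; exists tau; first by rewrite -eqL.
    move=> l' l'J; rewrite leNgt; apply/negP => hlt; apply: hno2; by exists l'.
  have := alleli hA ha hs (u:=u) (s':=s') (L:=L) ltac:(lia) ltac:(lia) ltac:(lia)
     ltac:(lia) ltac:(lia) hG hI hJ iI jJ.
  move=> h.
  have : 0 <= u%:R * K' by apply: mulr_ge0; rewrite ?ler0n.
  have : V (s + u)%N i - U (s + u)%N j - G <= 6%:R * a * L%:R + 2%:R * dl.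
    have : 0 <= L%:R * a by apply: mulr_ge0; rewrite ?ler0n.
    lra.
  move=> q8 q9.
  have : N%:R * (V (s + u)%N i - U (s + u)%N j - G) <=
      N%:R * (6%:R * a * L%:R + 2%:R * dl) by apply: ler_wpM2l => //; apply: ltW.
  lra.
have := inner t (leqnn t) i0 j0 i0I j0J.
move=> h; apply: le_trans h _.
have eL : L%:R = N%:R ^+ d :> R by rewrite /L natrX.
have hM : 1 <= N%:R ^+ d :> R by rewrite -eL ler1n.
have ht : t%:R <= N%:R * N%:R ^+ d :> R by rewrite -exprS -natrX ler_nat.
have hN1 : 1 <= N%:R :> R by rewrite ler1n.
rewrite eL exprS.
set M := N%:R ^+ d.
have q1 : t%:R * K' <= N%:R * M * K' by apply: ler_wpM2r.
have q2 : N%:R * dl <= N%:R * M * dl.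
  by apply: ler_wpM2r => //; rewrite ler_peMr // ltW.
have e : d.+1%:R * (6%:R * a + 2%:R * dl) * (N%:R * M) -
   (N%:R * (6%:R * a * M + 2%:R * dl) + t%:R * K') =
   (N%:R * M * K' - t%:R * K') + 2%:R * (N%:R * M * dl - N%:R * dl).
  by rewrite /K' -natr1; ring.
rewrite -subr_ge0 e; apply: addr_ge0; first by rewrite subr_ge0.
by apply: mulr_ge0; rewrite ?ler0n // subr_ge0.
Qed.

Lemma base_gen m n (A : 'M[R]_(m,n)) (dl : R) (I : {set 'I_m}) (J : {set 'I_n})
   (U : nat -> 'I_n -> R) (V : nat -> 'I_m -> R) (ii : nat -> 'I_m) (jj : nat -> 'I_n)
   (s T : nat) (G : R) (t : nat) (i : 'I_m) (j : 'I_n) :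
  (#|I| + #|J|)%N = 2%N -> sys A dl I J U V ii jj s T ->
  (forall i j, i \in I -> j \in J -> V s i - U s j <= G) ->
  (t <= T)%N -> i \in I -> j \in J -> V (s + t)%N i - U (s + t)%N j <= G.
Proof.
move=> hc hs hG htT iI jJ.
have c1 : #|I| = 1%N.
  have : (0 < #|I|)%N by apply/card_gt0P; exists i.
  have : (0 < #|J|)%N by apply/card_gt0P; exists j.
  lia.
have c2 : #|J| = 1%N by lia.
have [x ex] := cards1P (introT eqP c1); have [y ey] := cards1P (introT eqP c2).
have hi : forall tau, (s <= tau)%N -> (tau < s + T)%N -> ii tau = i /\ jj tau = j.
  move=> tau h1 h2; have [q1 q2 _ _ _] := hs tau h1 h2.
  move: q1 q2 iI jJ; rewrite ex ey !inE => /eqP -> /eqP -> /eqP -> /eqP ->.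
  by [].
have e : forall u, (u <= T)%N -> V (s + u)%N i - U (s + u)%N j = V s i - U s j.
  elim=> [|u IH] hu; first by rewrite addn0.
  have [_ _ q3 q4 _] := hs (s + u)%N ltac:(lia) ltac:(lia).
  have [e1 e2] := hi (s + u)%N ltac:(lia) ltac:(lia).
  rewrite addnS q3 q4 e1 e2 -IH; last by lia.
  lra.
by rewrite e //; apply: hG.
Qed.


Lemma Pall (a dl : R) : 0 <= dl -> forall d, Pd a dl d.
Proof. by move=> hdl; elim=> [|d IH]; [exact: base | exact: step]. Qed.

End CoreS.

Section Fin.
Variable R : realType.

Lemma vmax_ge m (w : 'I_m -> R) i : w i <= vmax w.
Proof.
rewrite /vmax; case: pickP => [k _|h]; first exact: le_bigmax.
by have := h i.
Qed.

Lemma vmin_le m (w : 'I_m -> R) i : vmin w <= w i.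
Proof.
rewrite /vmin; case: pickP => [k _|h]; first exact: bigmin_le.
by have := h i.
Qed.

Lemma vmax_att m (w : 'I_m -> R) (i0 : 'I_m) : exists i, vmax w = w i.
Proof.
rewrite /vmax; case: pickP => [k _|h]; last by have := h i0.
set M := \big[Num.max/w k]_(j < m) w j.
apply: NNPP => hno.
have h : forall i, w i < M.
  move=> i; rewrite lt_neqAle le_bigmax andbT; apply/eqP => e; apply: hno.
  by exists i.
have : M < M by apply: bigmax_lt => // j _; apply: h.
by rewrite ltxx.
Qed.

Lemma vmin_att m (w : 'I_m -> R) (i0 : 'I_m) : exists i, vmin w = w i.
Proof.
rewrite /vmin; case: pickP => [k _|h]; last by have := h i0.
set M := \big[Num.min/w k]_(j < m) w j.
apply: NNPP => hno.
have h : forall i, M < w i.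
  move=> i; rewrite lt_neqAle bigmin_le andbT; apply/eqP => e; apply: hno.
  by exists i.
have : M < M by apply: lt_bigmin => // j _; apply: h.
by rewrite ltxx.
Qed.

Lemma sum_ev m (f : 'I_m -> R) (y : 'I_m) : \sum_i ev y i * f i = f y.
Proof.
rewrite (bigD1 y) //= /ev eqxx mul1r big1 ?addr0 // => i /negbTE ->.
by rewrite mul0r.
Qed.

Definition cumU m n (A : 'M[R]_(m,n)) (xi : nat -> 'I_m) t j :=
  \sum_(1 <= k < t.+1) A (xi k) j.
Definition cumV m n (A : 'M[R]_(m,n)) (yj : nat -> 'I_n) t i :=
  \sum_(1 <= k < t.+1) A i (yj k).

Lemma xA_avg m n (A : 'M[R]_(m,n)) xi t j :
  xA A (avg xi t) j = cumU A xi t j / t%:R.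
Proof.
rewrite /xA /avg /cumU.
under eq_bigr => i _ do rewrite mulrAC.
rewrite -mulr_suml; congr (_ * _).
under eq_bigr => i _ do rewrite mulr_suml.
rewrite exchange_big /=; apply: eq_bigr => k _.
exact: sum_ev.
Qed.

Lemma Ay_avg m n (A : 'M[R]_(m,n)) yj t i :
  Ay A (avg yj t) i = cumV A yj t i / t%:R.
Proof.
rewrite /Ay /avg /cumV.
under eq_bigr => j _ do rewrite mulrA.
rewrite -mulr_suml; congr (_ * _).
under eq_bigr => j _ do rewrite mulr_sumr.
rewrite exchange_big /=; apply: eq_bigr => k _.
under eq_bigr => j _ do rewrite mulrC.
exact: sum_ev.
Qed.


Lemma Ay_anti m n (A : 'M[R]_(m,n)) yj yj' t i : (1 <= t)%N ->
  Ay A (anti_avg yj yj' t) i = (cumV A yj t i + A i (yj' t.+1)) / t.+1%:R.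
Proof.
move=> ht; rewrite /Ay /anti_avg.
under eq_bigr => j _ do rewrite mulrDr.
rewrite big_split /=.
have e1 : \sum_j A i j * (t%:R / t.+1%:R * avg yj t j) =
    t%:R / t.+1%:R * Ay A (avg yj t) i.
  by rewrite /Ay mulr_sumr; apply: eq_bigr => j _; rewrite mulrCA.
have e2 : \sum_j A i j * (1 / t.+1%:R * ev (yj' t.+1) j) =
    1 / t.+1%:R * A i (yj' t.+1).
  rewrite -(sum_ev (fun j => A i j)) mulr_sumr; apply: eq_bigr => j _.
  by rewrite [ev _ j * _]mulrC mulrCA.
rewrite e1 e2 Ay_avg.
have h1 : t%:R != 0 :> R by rewrite pnatr_eq0 -lt0n.
have h2 : t.+1%:R != 0 :> R by rewrite pnatr_eq0.
by field; rewrite -natr1 addrC in h2; rewrite h1 h2.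
Qed.

Lemma avg_simplex m (s : nat -> 'I_m) t : (1 <= t)%N -> simplex (avg s t : 'I_m -> R).
Proof.
move=> ht; split.
  move=> r; rewrite /avg; apply: divr_ge0; last by rewrite ler0n.
  by apply: sumr_ge0 => k _; rewrite /ev ler0n.
rewrite /avg -mulr_suml exchange_big /=.
have -> : \sum_(1 <= k < t.+1) \sum_(i < m) ev (s k) i = \sum_(1 <= k < t.+1) (1 : R).
  apply: eq_bigr => k _.
  by have := sum_ev (fun _ => (1 : R)) (s k); under eq_bigr => i _ do rewrite mulr1.
rewrite sumr_const_nat subn1 /= divff //.
by rewrite pnatr_eq0 -lt0n.
Qed.

Lemma minmax m n (A : 'M[R]_(m,n)) x y : simplex x -> simplex y ->
  vmin (xA A x) <= vmax (Ay A y).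
Proof.
move=> [hx0 hx1] [hy0 hy1].
have e1 : vmin (xA A x) = \sum_j y j * vmin (xA A x).
  by rewrite -mulr_suml hy1 mul1r.
have e2 : vmax (Ay A y) = \sum_i x i * vmax (Ay A y).
  by rewrite -mulr_suml hx1 mul1r.
rewrite e1 e2.
apply: (@le_trans _ _ (\sum_j y j * xA A x j)).
  by apply: ler_sum => j _; apply: ler_wpM2l => //; apply: vmin_le.
apply: (@le_trans _ _ (\sum_i x i * Ay A y i)); last first.
  by apply: ler_sum => i _; apply: ler_wpM2l => //; apply: vmax_ge.
rewrite /xA /Ay.
under eq_bigr => j _ do rewrite mulr_sumr.
under [in X in _ <= X]eq_bigr => i _ do rewrite mulr_sumr.
rewrite exchange_big /=; apply: ler_sum => i _; apply: ler_sum => j _.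
by rewrite mulrCA [y j * _]mulrC.
Qed.

Lemma gv_bounds m n (A : 'M[R]_(m,n)) x y : simplex x -> simplex y ->
  vmin (xA A x) <= game_value A /\ game_value A <= vmax (Ay A y).
Proof.
move=> hx hy; split.
  apply: sup_upper_bound; last by exists x.
  split; first by exists (vmin (xA A x)); exists x.
  by exists (vmax (Ay A y)) => v [x' [hx' ->]]; apply: minmax.
apply: ge_sup; first by exists (vmin (xA A x)); exists x.
by move=> v [x' [hx' ->]]; apply: minmax.
Qed.


Lemma xA_anti m n (A : 'M[R]_(m,n)) xi xi' t j : (1 <= t)%N ->
  xA A (anti_avg xi xi' t) j = (cumU A xi t j + A (xi' t.+1) j) / t.+1%:R.
Proof.
move=> ht; rewrite /xA /anti_avg.
under eq_bigr => i _ do rewrite mulrDl.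
rewrite big_split /=.
have e1 : \sum_i (t%:R / t.+1%:R * avg xi t i) * A i j =
    t%:R / t.+1%:R * xA A (avg xi t) j.
  by rewrite /xA mulr_sumr; apply: eq_bigr => i _; rewrite -!mulrA.
have e2 : \sum_i (1 / t.+1%:R * ev (xi' t.+1) i) * A i j =
    1 / t.+1%:R * A (xi' t.+1) j.
  rewrite -(sum_ev (fun i => A i j)) mulr_sumr; apply: eq_bigr => i _.
  by rewrite -!mulrA.
rewrite e1 e2 xA_avg.
have h1 : t%:R != 0 :> R by rewrite pnatr_eq0 -lt0n.
have h2 : t.+1%:R != 0 :> R by rewrite pnatr_eq0.
by field; rewrite -natr1 addrC in h2; rewrite h1 h2.
Qed.

Lemma afp_sys m n (A : 'M[R]_(m,n)) xi xi' yj yj' (a : R) T :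
  AFP A xi xi' yj yj' -> (forall i j, `|A i j| <= a) ->
  sys A (2%:R * a) [set: 'I_m]%SET [set: 'I_n]%SET (fun t => cumU A xi t)
    (fun t => cumV A yj t) (fun t => xi t.+1) (fun t => yj t.+1) 0 T.
Proof.
move=> hafp hA tau _ _.
have ha : 0 <= a := le_trans (normr_ge0 _) (hA (xi 0%N) (yj 0%N)).
split; rewrite ?inE //.
- by move=> j; rewrite /cumU big_nat_recr.
- by move=> i; rewrite /cumV big_nat_recr.
case: (posnP tau) => [->|htau].
  by split => k _; rewrite /cumV /cumU !big_geq //; lra.
have [h1 h2 h3 h4] := hafp tau htau.
split => k _.
- move/eqP: h3 => h3; have := vmax_ge (Ay A (anti_avg yj yj' tau)) k.
  rewrite -h3 !Ay_anti // ler_pM2r ?invr_gt0 ?ltr0n //.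
  have := hA k (yj' tau.+1); have := hA (xi tau.+1) (yj' tau.+1).
  rewrite !ler_norml => /andP[? ?] /andP[? ?]; lra.
- move/eqP: h4 => h4; have := vmin_le (xA A (anti_avg xi xi' tau)) k.
  rewrite -h4 !xA_anti // ler_pM2r ?invr_gt0 ?ltr0n //.
  have := hA (xi' tau.+1) k; have := hA (xi' tau.+1) (yj tau.+1).
  rewrite !ler_norml => /andP[? ?] /andP[? ?]; lra.
Qed.

Lemma entry_le m n (A : 'M[R]_(m,n)) i j :
  `|A i j| <= \sum_i' \sum_j' `|A i' j'|.
Proof.
rewrite (bigD1 i) //= (bigD1 j) //=.
have h1 : 0 <= \sum_(k < n | k != j) `|A i k| by apply: sumr_ge0.
have h2 : 0 <= \sum_(k < m | k != i) \sum_l `|A k l|.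
  by apply: sumr_ge0 => k _; apply: sumr_ge0.
lra.
Qed.


Lemma wfacts (d t : nat) : (1 <= d)%N -> (1 <= t)%N ->
  let w : R := t%:R `^ (d%:R^-1) in [/\ 0 <= w, 1 <= w & w ^+ d = t%:R].
Proof.
move=> hd ht w.
have hw0 : 0 <= w by apply: powR_ge0.
have hwd : w ^+ d = t%:R.
  rewrite /w -powR_mulrn // -powRrM mulVf ?powRr1 ?ler0n //.
  by rewrite pnatr_eq0 -lt0n.
split => //.
rewrite leNgt; apply/negP => hw1.
have := exprn_ilt1 d hw0 hw1; rewrite hwd -lt0n hd => h.
have : (1 : R) <= t%:R by rewrite ler1n.
lra.
Qed.

Lemma rate (g : nat -> R) (K : R) d : 0 <= K -> (1 <= d)%N ->
 (forall t N, (1 <= t)%N -> (1 <= N)%N -> (t <= N ^ d)%N ->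
    N%:R * (g t * t%:R) <= K * N%:R ^+ d) ->
 (exists C, forall t, (1 <= t)%N -> g t <= C * t%:R `^ (- d%:R^-1)) /\
 (forall eps, 0 < eps -> exists T, forall t, (T <= t)%N -> g t <= eps).
Proof.
move=> hK; case: d => // d' _ hyp.
set C := K * 2%:R ^+ d'.
have hC : 0 <= C by apply: mulr_ge0 => //; apply: exprn_ge0.
have key : forall t, (1 <= t)%N -> g t <= C / t%:R `^ (d'.+1%:R^-1).
  move=> t ht; have [hw0 hw1 hwd] := @wfacts d'.+1 t erefl ht.
  set w := t%:R `^ (d'.+1%:R^-1) in hw0 hw1 hwd *.
  have hwp : 0 < w by apply: lt_le_trans hw1.
  set N := (Num.truncn w).+1.
  have hN1 : w < N%:R by apply: truncnS_gt.
  have hN2 : N%:R <= w + 1 by rewrite /N -natr1 lerD2r truncn_le.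
  have htN : (t <= N ^ d'.+1)%N.
    rewrite -(ler_nat R) natrX -hwd ler_pXn2r // ?nnegrE ?ler0n //.
    exact: ltW.
  have := hyp t N ht ltac:(lia) htN.
  have hNp : 0 < N%:R :> R by rewrite ltr0n.
  rewrite exprS [K * _]mulrCA ler_pM2l // => h1.
  have h2 : N%:R ^+ d' <= (2%:R * w) ^+ d'.
    by apply: lerXn2r; rewrite ?nnegrE ?ler0n //; lra.
  have hwd' : 0 < w ^+ d' by apply: exprn_gt0.
  rewrite ler_pdivlMr //.
  rewrite -hwd exprS mulrA in h1.
  rewrite -(ler_pM2r hwd') /C.
  apply: le_trans h1 _.
  by rewrite -mulrA -exprMn; apply: ler_wpM2l.
split.
  exists C => t ht; rewrite powRN; exact: key.
move=> eps heps.
set M := (Num.truncn (C / eps)).+1.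
have hM : C / eps < M%:R by apply: truncnS_gt.
exists (M ^ d'.+1)%N => t ht.
have ht1 : (1 <= t)%N by apply: leq_trans ht; rewrite expn_gt0.
have [hw0 hw1 hwd] := @wfacts d'.+1 t erefl ht1.
set w := t%:R `^ (d'.+1%:R^-1) in hw0 hw1 hwd *.
have hwp : 0 < w by apply: lt_le_trans hw1.
have hwM : M%:R <= w.
  rewrite leNgt; apply/negP => hlt.
  have := ltrXn2r d'.+1 hw0 hlt; rewrite hwd -natrX ltr_nat /= => h.
  by move: ht; rewrite leqNgt h.
apply: le_trans (key t ht1) _.
rewrite ler_pdivrMr //.
rewrite ltr_pdivrMr // in hM.
apply: le_trans (ltW hM) _.
by rewrite mulrC; apply: ler_wpM2l => //; apply: ltW.
Qed.


Lemma gapN m n (A : 'M[R]_(m,n)) xi xi' yj yj' :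
  AFP A xi xi' yj yj' ->
  let a := \sum_i' \sum_j' `|A i' j'| in
  let g t := vmax (Ay A (avg yj t)) - vmin (xA A (avg xi t)) in
  (forall t N, (1 <= t)%N -> (1 <= N)%N -> (t <= N ^ (m + n - 2))%N ->
    N%:R * (g t * t%:R) <=
      ((m + n - 2)%N%:R * (6%:R * a + 2%:R * (2%:R * a))) * N%:R ^+ (m + n - 2))
  /\ ((m + n - 2)%N = 0%N -> forall t, (1 <= t)%N -> g t <= 0).
Proof.
move=> hafp a g.
have hA : forall i j, `|A i j| <= a by move=> i j; apply: entry_le.
have ha : 0 <= a := le_trans (normr_ge0 _) (hA (xi 0%N) (yj 0%N)).
have hm : (0 < m)%N by apply: leq_ltn_trans (leq0n _) (ltn_ord (xi 0%N)).
have hn : (0 < n)%N by apply: leq_ltn_trans (leq0n _) (ltn_ord (yj 0%N)).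
have hc : (#|[set: 'I_m]%SET| + #|[set: 'I_n]%SET|)%N = (m + n - 2).+2.
  by rewrite !cardsT !card_ord; lia.
have hG : forall i j, i \in [set: 'I_m]%SET -> j \in [set: 'I_n]%SET ->
    cumV A yj 0 i - cumU A xi 0 j <= 0.
  by move=> i j _ _; rewrite /cumV /cumU !big_geq // subrr.
have eg : forall t, (1 <= t)%N -> exists i j, g t * t%:R = cumV A yj t i - cumU A xi t j.
  move=> t ht.
  have [i ei] := vmax_att (Ay A (avg yj t)) (xi 0%N).
  have [j ej] := vmin_att (xA A (avg xi t)) (yj 0%N).
  exists i, j; rewrite /g ei ej Ay_avg xA_avg -mulrBl mulfVK //.
  by rewrite pnatr_eq0 -lt0n.
split.
  move=> t N ht hN htN.
  have [i [j ->]] := eg t ht.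
  have := @Pall R a (2%:R * a) ltac:(lra) (m + n - 2)%N m n A [set: 'I_m]%SET [set: 'I_n]%SET
    (fun t => cumU A xi t) (fun t => cumV A yj t) (fun t => xi t.+1) (fun t => yj t.+1)
    0%N t 0 N t i j hA hc (afp_sys (T:=t) hafp hA) hG hN (leqnn t) htN (finset.in_setT i) (finset.in_setT j).
  by rewrite add0n subr0.
move=> hd t ht.
have [i [j e]] := eg t ht.
have := @base_gen R m n A (2%:R * a) [set: 'I_m]%SET [set: 'I_n]%SET
    (fun t => cumU A xi t) (fun t => cumV A yj t) (fun t => xi t.+1) (fun t => yj t.+1)
    0%N t 0 t i j ltac:(rewrite hc hd //) (afp_sys (T:=t) hafp hA) hG (leqnn t) (finset.in_setT i) (finset.in_setT j).
rewrite add0n /= -e => h.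
have htp : 0 < t%:R :> R by rewrite ltr0n.
by rewrite -(ler_pM2r htp) mul0r.
Qed.

End Fin.

Theorem proposition1 (R : realType) (m n : nat) (A : 'M[R]_(m, n))
    (xi xi' : nat -> 'I_m) (yj yj' : nat -> 'I_n) :
  AFP A xi xi' yj yj' ->
  [/\ (fun t => vmin (xA A (avg xi t))) @ \oo --> game_value A,
      (fun t => vmax (Ay A (avg yj t))) @ \oo --> game_value A
    & exists C : R, forall t : nat, (1 <= t)%N ->
        vmax (Ay A (avg yj t)) - vmin (xA A (avg xi t))
          <= C * (t%:R `^ (- ((m + n - 2)%N%:R)^-1))].
Proof.
move=> hafp.
have [H1 H0] := gapN hafp.
set a := \sum_i' \sum_j' `|A i' j'| in H1.
set g := fun t => vmax (Ay A (avg yj t)) - vmin (xA A (avg xi t)) in H1 H0.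
have ha : 0 <= a by apply: sumr_ge0 => i _; apply: sumr_ge0.
have [hrate hconv] : (exists C : R, forall t, (1 <= t)%N ->
        g t <= C * (t%:R `^ (- ((m + n - 2)%N%:R)^-1))) /\
     (forall eps, 0 < eps -> exists T, forall t, (T <= t)%N -> g t <= eps).
  case: (posnP (m + n - 2)%N) => hd.
    split.
      exists 0 => t ht; rewrite mul0r; exact: H0.
    move=> eps heps; exists 1%N => t ht.
    by apply: le_trans (H0 hd t ht) _; apply: ltW.
  apply: rate hd H1.
  by apply: mulr_ge0; rewrite ?ler0n //; lra.
have hb : forall t, (1 <= t)%N ->
    vmin (xA A (avg xi t)) <= game_value A /\ game_value A <= vmax (Ay A (avg yj t)).
  by move=> t ht; apply: gv_bounds; apply: avg_simplex.
split => //.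
- apply/cvgrPdist_le => eps heps.
  have [T hT] := hconv eps heps.
  exists T.+1 => // t /= ht.
  have [b1 b2] := hb t ltac:(lia).
  have := hT t ltac:(lia); rewrite /g => h.
  rewrite ger0_norm; lra.
- apply/cvgrPdist_le => eps heps.
  have [T hT] := hconv eps heps.
  exists T.+1 => // t /= ht.
  have [b1 b2] := hb t ltac:(lia).
  have := hT t ltac:(lia); rewrite /g => h.
  rewrite ler0_norm; lra.
Qed.
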